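(* Let $\mathcal N\subseteq\mathcal X^2$ be a symmetric neighbor relation, $Q$ a probability measure on $\mathcal Z$, and $P_{Z|X}$ a Markov kernel with $P_{Z|X}(\cdot|x)\ll Q$ for all $x$. If $P_{Z|X}$ is $\varepsilon$-DP with respect to $\mathcal N$, then for every $\alpha>1$ the PPR-compressed mechanism $x\mapsto((Z_i)_{i\ge1},K)$ is $2\alpha\varepsilon$-DP with respect to $\mathcal N$; i.e., for all $(x,x')\in\mathcal N$ and all measurable $\mathcal S\subseteq\mathcal Z^{\infty}\times\mathbb Z_{>0}$, $\Pr(((Z_i)_i,K)\in\mathcal S\mid X=x)\le e^{2\alpha\varepsilon}\Pr(((Z_i)_i,K)\in\mathcal S\mid X=x')$.
   Context: A Markov kernel $P_{W|X}$ is $(\varepsilon,\delta)$-DP w.r.t. a symmetric relation $\mathcal N\subseteq\mathcal X^2$ if $\Pr(W\in S\mid X=x)\le e^{\varepsilon}\Pr(W\in S\mid X=x')+\delta$ for all $(x,x')\in\mathcal N$ and measurable $S$; $\varepsilon$-DP means $(\varepsilon,0)$-DP. PPR: let $Z_1,Z_2,\ldots$ be i.i.d. $\sim Q$, independent of the points $T_1\le T_2\le\cdots$ of a rate-$1$ Poisson process on $[0,\infty)$. For input $x$, with $P=P_{Z|X}(\cdot|x)$, set $\tilde T_i:=T_i(\frac{\mathrm dP}{\mathrm dQ}(Z_i))^{-1}$ ($:=\infty$ if the derivative is $0$, $\infty^{-\alpha}:=0$), and draw $K$ with $\Pr(K=k\mid (Z_i,T_i)_i)=\tilde T_k^{-\alpha}/\sum_i\tilde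 T_i^{-\alpha}$ (fresh randomness for each input). The PPR-compressed mechanism is the kernel $x\mapsto((Z_i)_{i\ge1},K)$; the shared sequence $(Z_i)$ does not depend on $x$. *)

(* Defs.v *)
From HB Require Import structures.
From mathcomp Require Import all_boot all_order all_algebra.
From mathcomp Require Import all_classical all_reals all_analysis.
Set Implicit Arguments. Unset Strict Implicit. Unset Printing Implicit Defensive.
Import Order.TTheory GRing.Theory Num.Theory.
Local Open Scope classical_set_scope.
Local Open Scope ring_scope.

Section defs.
Context {R : realType}.

Definition mutually_independent {dO} {Omega : measurableType dO} {I : eqType}
  (P : probability Omega R) (F : I -> set (set Omega)) : Prop :=
  forall (J : seq I) (E : I -> set Omega), uniq J ->
    (forall j, j \in J -> F j (E j)) ->
    P (\big[setI/setT]_(j <- J) E j) = (\prod_(j <- J) P (E j))%E.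

Definition sigma_of {dO d} {Omega : measurableType dO} {T : measurableType d}
  (X : Omega -> T) : set (set Omega) :=
  [set X @^-1` A | A in [set A : set T | measurable A]].

Definition DP {X T : Type} (N : X -> X -> Prop) (eps delta : R)
   (meas : set T -> Prop) (mu : X -> set T -> \bar R) : Prop :=
  forall x x' S, N x x' -> meas S ->
    (mu x S <= (expR eps)%:E * mu x' S + delta%:E)%E.

(* product sigma-algebra on Z^infty x Z_{>0} (second component 0-indexed) *)
Definition seq_nat_measurable {d} {Z : measurableType d} : set (set ((nat -> Z) * nat)) :=
  <<s [set: (nat -> Z) * nat],
      [set E | exists (i : nat) (A : set Z), measurable A /\ E = [set p | A (p.1 i)]]
      `|` [set E | exists n : nat, E = [set p | p.2 = n]] >>.

(* arrival times T_0 <= T_1 <= ... of a rate-1 Poisson process built from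
   i.i.d. Exp(1) inter-arrival times E_0, E_1, ... (0-indexed: T_k = E_0+...+E_k) *)
Definition arrival {Omega : Type} (Es : nat -> Omega -> R) (k : nat) (w : Omega) : R :=
  \sum_(j < k.+1) Es j w.

(* unnormalized PPR weight  T~_i^(-alpha) = T_i^(-alpha) * (dP/dQ (Z_i))^alpha,
   with the convention T~_i = oo, T~_i^(-alpha) = 0 when dP/dQ (Z_i) = 0 *)
Definition ppr_uweight {Omega : Type} {Z : Type} (alpha : R) (f : Z -> R)
  (Zs : nat -> Omega -> Z) (Ts : nat -> Omega -> R) (w : Omega) (i : nat) : R :=
  (Ts i w) `^ (- alpha) * (f (Zs i w)) `^ alpha.

(* Pr(K = k | (Z_i, T_i)_i) *)
Definition ppr_weight {Omega : Type} {Z : Type} (alpha : R) (f : Z -> R)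
  (Zs : nat -> Omega -> Z) (Ts : nat -> Omega -> R) (w : Omega) (k : nat) : R :=
  ppr_uweight alpha f Zs Ts w k
  / fine (\sum_(i <oo) (ppr_uweight alpha f Zs Ts w i)%:E)%E.

(* Pr(((Z_i)_i, K) \in S) for the PPR-compressed mechanism with density f = dP/dQ:
   E[ sum_k 1_S((Z_i)_i, k) Pr(K = k | (Z_i,T_i)_i) ] *)
Definition ppr_prob {dO d} {Omega : measurableType dO} {Z : measurableType d}
  (alpha : R) (f : Z -> R) (Zs : nat -> Omega -> Z) (Ts : nat -> Omega -> R)
  (P : probability Omega R) (S : set ((nat -> Z) * nat)) : \bar R :=
  (\int[P]_w \sum_(k <oo)
      ((\1_S ((fun i => Zs i w), k) : R)%:E * (ppr_weight alpha f Zs Ts w k)%:E))%E.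

End defs.

(* Main.v *)
Require Import Defs.
From HB Require Import structures.
From mathcomp Require Import all_boot all_order all_algebra.
From mathcomp Require Import all_classical all_reals all_analysis.
From mathcomp Require Import ring lra.
Import measurable_realfun.
Import HBNNSimple.
Import Order.TTheory GRing.Theory Num.Theory.
Local Open Scope classical_set_scope.
Local Open Scope ring_scope.

Lemma ratio_le (R : realType) (u v E : R) (SU SV : \bar R) :
  0 < E -> 0 <= u -> 0 <= v -> u <= E * v ->
  (0 <= SU)%E -> (0 <= SV)%E -> (SU <= E%:E * SV)%E -> (SV <= E%:E * SU)%E ->
  u / fine SU <= E * E * (v / fine SV).
Proof.
move=> E0 u0 v0 uv SU0 SV0 SUV SVU.
have rhs0 : forall SV : \bar R, (0 <= SV)%E -> 0 <= E * E * (v / fine SV).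
  move=> SV1 SV10; apply: mulr_ge0; [apply: mulr_ge0; exact: ltW|
     apply: divr_ge0 => //; exact: fine_ge0].
have {}rhs0 := rhs0 SV SV0.
case: SU SU0 SUV SVU rhs0 => [a| |] //=; last by rewrite invr0 mulr0.
rewrite lee_fin => a0.
case: SV SV0 => [b| |] //=.
- rewrite lee_fin => b0; rewrite !lee_fin => ab ba.
  have [->|anz] := eqVneq a 0; first by rewrite invr0 mulr0.
  have apos : 0 < a by rewrite lt_def anz.
  have bpos : 0 < b.
    rewrite lt_def b0 andbT; apply/negP => /eqP b00.
    by move: ab; rewrite b00 mulr0 => ab; move: apos; rewrite ltNge ab.
  rewrite ler_pdivrMr // => _; apply: (le_trans uv).
  have -> : E * E * (v / b) * a = E * (v * (E * a) / b).
    by ring.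
  rewrite ler_pM2l // ler_pdivlMr //.
  exact: ler_wpM2l.
Qed.

Lemma series_le (R : realType) (u v : nat -> R) (E : R) : 0 <= E ->
  (forall i, 0 <= u i) -> (forall i, 0 <= v i) -> (forall i, u i <= E * v i) ->
  (\sum_(i <oo) (u i)%:E <= E%:E * \sum_(i <oo) (v i)%:E)%E.
Proof.
move=> E0 u0 v0 uv; rewrite -nneseriesZl; last by move=> i _; rewrite lee_fin.
apply: lee_nneseries => [i _ _|i _]; first by rewrite lee_fin.
by rewrite -EFinM lee_fin.
Qed.

Lemma weight_le (R : realType) (u v : nat -> R) (E : R) : 0 < E ->
  (forall i, 0 <= u i) -> (forall i, 0 <= v i) ->
  (forall i, u i <= E * v i) -> (forall i, v i <= E * u i) -> forall k,
  u k / fine (\sum_(i <oo) (u i)%:E)%E <= E * E * (v k / fine (\sum_(i <oo) (v i)%:E)%E).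
Proof.
move=> E0 u0 v0 uv vu k; apply: ratio_le => //.
- by apply: nneseries_ge0 => i _ _; rewrite lee_fin.
- by apply: nneseries_ge0 => i _ _; rewrite lee_fin.
- by apply: series_le => //; exact: ltW.
- by apply: series_le => //; exact: ltW.
Qed.

Lemma le_int_nomeas d (T : measurableType d) (R : realType) (mu : {measure set T -> \bar R})
  (g F : T -> \bar R) : (forall x, (0 <= g x)%E) -> (forall x, (g x <= F x)%E) ->
  (\int[mu]_x g x <= \int[mu]_x F x)%E.
Proof.
move=> g0 gF; have F0 x : (0 <= F x)%E by apply: le_trans (g0 x) (gF x).
rewrite !ge0_integralTE //; apply: ereal_sup_le => _ [h hle <-]; exists h => //.
by move=> x; apply: le_trans (hle x) (gF x).
Qed.

Lemma meas_lt d (Z : measurableType d) (R : realType) (f1 f2 : Z -> R) (c : R) :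
  measurable_fun setT f1 -> measurable_fun setT f2 ->
  measurable [set z | c * f2 z < f1 z].
Proof.
move=> mf1 mf2.
have -> : [set z | c * f2 z < f1 z] = ~` (setT `&` [set z | f1 z <= c * f2 z]).
  apply/seteqP; split => z /=.
    by move=> Az [_ le]; move: Az; rewrite ltNge le.
  by move=> h; rewrite ltNge; apply/negP => le; apply: h.
apply: measurableC; apply: measurable_fun_le => //.
exact: measurable_funM.
Qed.

Lemma dens_null d (Z : measurableType d) (R : realType) (Q P1 P2 : probability Z R)
  (f1 f2 : Z -> R) (c : R) : 0 <= c ->
  measurable_fun setT f1 -> measurable_fun setT f2 ->
  (forall z, 0 <= f1 z) -> (forall z, 0 <= f2 z) ->
  (forall A, measurable A -> P1 A = (\int[Q]_(z in A) (f1 z)%:E)%E) ->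
  (forall A, measurable A -> P2 A = (\int[Q]_(z in A) (f2 z)%:E)%E) ->
  (forall A, measurable A -> (P1 A <= c%:E * P2 A + 0%:E)%E) ->
  Q [set z | c * f2 z < f1 z] = 0%E.
Proof.
move=> c0 mf1 mf2 f10 f20 d1 d2 DP.
set A := [set z | c * f2 z < f1 z].
have mA : measurable A by exact: meas_lt.
have mcf2 : measurable_fun setT (fun z => c * f2 z) by exact: measurable_funM.
have int1 : Q.-integrable A (EFin \o f1).
  apply/integrableP; split.
    by apply/measurable_EFinP; exact: measurable_funTS.
  rewrite (eq_integral (fun z => (f1 z)%:E)); last first.
    by move=> z _ /=; rewrite ger0_norm.
  by rewrite -d1 // (le_lt_trans (probability_le1 _ mA)) // ltry.
have int2 : Q.-integrable A (EFin \o (fun z => c * f2 z)).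
  apply/integrableP; split.
    by apply/measurable_EFinP; exact: measurable_funTS.
  rewrite (eq_integral (fun z => (c%:E * (f2 z)%:E)%E)); last first.
    by move=> z _ /=; rewrite ger0_norm ?EFinM // mulr_ge0.
  rewrite ge0_integralZl_EFin //; last 2 first.
  - by move=> z _; rewrite lee_fin.
  - by apply/measurable_EFinP; exact: measurable_funTS.
  rewrite -d2 //.
  by rewrite -(fineK (fin_num_measure P2 A mA)) -EFinM ltry.
pose phi z := ((f1 z)%:E - (c * f2 z)%:E)%E.
have phiA z : A z -> (0 < phi z)%E by rewrite /phi sube_gt0 lte_fin.
have intphi : (\int[Q]_(z in A) phi z <= 0)%E.
  rewrite /phi integralB_EFin // -d1 //.
  rewrite (eq_integral (fun z => (c%:E * (f2 z)%:E)%E)); last first.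
    by move=> z _; rewrite EFinM.
  rewrite ge0_integralZl_EFin //; last 2 first.
  - by move=> z _; rewrite lee_fin.
  - by apply/measurable_EFinP; exact: measurable_funTS.
  rewrite -d2 // sube_le0; have := DP A mA; rewrite adde0 //.
have mphi : measurable_fun A phi.
  apply/measurable_EFinP; apply: measurable_funTS.
  exact: measurable_funB.
have : (\int[Q]_(z in A) `|phi z| = 0)%E.
  rewrite (eq_integral phi); last first.
    by move=> z; rewrite inE => Az; rewrite gee0_abs // ltW // phiA.
  apply/eqP; rewrite eq_le intphi /=; apply: integral_ge0 => z Az.
  exact/ltW/phiA.
move/(ae_eq_integral_abs Q mA mphi) => [M [mM M0 sM]].
apply: (subset_measure0 mA mM) => // z Az; apply: sM => /= h.
by have := phiA z Az; rewrite h // ltxx.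
Qed.

Lemma final_step d (T : measurableType d) (R : realType) (P : probability T R)
  (G : set T) (F1 F2 : T -> \bar R) (c : R) :
  measurable G -> P.-negligible (~` G) -> 0 < c ->
  (forall w, (0 <= F1 w)%E) -> (forall w, (0 <= F2 w)%E) ->
  (forall w, G w -> (F1 w <= c%:E * F2 w)%E) ->
  (\int[P]_w F1 w <= c%:E * \int[P]_w F2 w)%E.
Proof.
move=> mG nG c0 F10 F20 Fle.
rewrite (ge0_integralTE P F10); apply: ge_ereal_sup => _ [h hle <-].
have -> : sintegral P h = (\int[P]_w (h w)%:E)%E.
  by rewrite integral_nnsfun // patch_setT.
pose g w := (h w * \1_G w)%:E.
have mh : measurable_fun setT h by exact: measurable_funPT.
have mg : measurable_fun setT g.
  apply/measurable_EFinP; apply: measurable_funM; first exact: mh.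
  exact: (measurable_indic mG).
rewrite (ae_eq_integral g) //; last first.
- apply: (negligibleS _ nG) => w /= Hw Gw; apply: Hw => _.
  by rewrite /g indicE mem_set // mulr1.
- by apply/measurable_EFinP.
have -> : (\int[P]_w g w = c%:E * \int[P]_w (c^-1 * (h w * \1_G w))%:E)%E.
  rewrite -ge0_integralZl_EFin //; last 3 first.
  - move=> w _; rewrite lee_fin; apply: mulr_ge0; first by rewrite invr_ge0 ltW.
    apply: mulr_ge0; first exact: fun_ge0.
    by rewrite indicE; case: (_ \in _).
  - apply/measurable_EFinP; apply: measurable_funM => //.
    apply: measurable_funM => //; exact: measurable_indic.
  - exact: ltW.
  apply: eq_integral => w _; rewrite -EFinM mulrA divff ?mul1r //.
  exact: lt0r_neq0.
apply: lee_wpmul2l; first by rewrite lee_fin ltW.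
apply: le_int_nomeas => w.
  rewrite lee_fin; apply: mulr_ge0; first by rewrite invr_ge0 ltW.
  apply: mulr_ge0; first exact: fun_ge0.
  by rewrite indicE; case: (_ \in _).
rewrite indicE; have [Gw|nGw] := boolP (w \in G); last first.
  by rewrite mulr0 mulr0 F20.
rewrite mulr1 EFinM.
have hF := le_trans (hle w) (Fle w (set_mem Gw)).
apply: le_trans (lee_wpmul2l _ hF) _; first by rewrite lee_fin invr_ge0 ltW.
by rewrite muleA -EFinM mulVf ?mul1e // lt0r_neq0.
Qed.

Theorem theorem2 (R : realType) (X : Type) (N : X -> X -> Prop)
  (dZ : measure_display) (Z : measurableType dZ)
  (Q : probability Z R) (PZX : X -> probability Z R) (f : X -> Z -> R)
  (N_sym : forall x x', N x x' -> N x' x)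
  (PZX_ac : forall x, PZX x `<< Q)
  (f_meas : forall x, measurable_fun setT (f x))
  (f_ge0 : forall x z, 0 <= f x z)
  (f_dens : forall x (A : set Z), measurable A ->
     PZX x A = (\int[Q]_(z in A) (f x z)%:E)%E)
  (eps : R) (PZX_DP : DP N eps 0 measurable (fun x => PZX x))
  (alpha : R) (alpha_gt1 : 1 < alpha)
  (dO : measure_display) (Omega : measurableType dO) (P : probability Omega R)
  (Zs : nat -> Omega -> Z) (Es : nat -> Omega -> R)
  (Zs_meas : forall i, measurable_fun setT (Zs i))
  (Es_meas : forall j, measurable_fun setT (Es j))
  (Zs_law : forall i (A : set Z), measurable A -> P (Zs i @^-1` A) = Q A)
  (Es_law : forall j (A : set R), measurable A ->
     P (Es j @^-1` A) = exponential_prob 1 A)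
  (indep : mutually_independent P
     (fun ij : nat + nat => match ij with
                            | inl i => sigma_of (Zs i)
                            | inr j => sigma_of (Es j) end)) :
  DP N (2 * alpha * eps) 0 seq_nat_measurable
     (fun x => ppr_prob alpha (f x) Zs (arrival Es) P).
Proof.
move=> x x' S Nxx' _; rewrite adde0 /ppr_prob.
set c := expR (2 * alpha * eps).
set E := expR (alpha * eps).
have cE : c = E * E by rewrite /c /E -expRD; congr expR; ring.
have E0 : 0 < E by exact: expR_gt0.
have c0 : 0 < c by exact: expR_gt0.
have nullA y y' : N y y' -> Q [set z | expR eps * f y' z < f y z] = 0%E.
  move=> Nyy'; apply: (@dens_null _ _ _ Q (PZX y) (PZX y')) => //.
  all: try exact: f_dens; try exact: expR_ge0.
  by move=> A mA; exact: PZX_DP.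
set B := [set z | expR eps * f x' z < f x z] `|` [set z | expR eps * f x z < f x' z].
have mB : measurable B by apply: measurableU; exact: meas_lt.
have QB : Q B = 0%E.
  apply/eqP; rewrite eq_le measure_ge0 andbT.
  rewrite (le_trans (measureU2 _ _ _)) //; try exact: meas_lt.
  rewrite -[leRHS](adde0 0); apply: leeD; rewrite le_eqVlt; apply/orP; left; apply/eqP.
    exact: nullA.
  by apply: nullA; exact: N_sym.
set G := ~` \bigcup_i (Zs i @^-1` B).
have mpre i : measurable (Zs i @^-1` B).
  by rewrite -[X in measurable X]setTI; exact: Zs_meas.
have mG : measurable G by apply: measurableC; exact: bigcupT_measurable.
have nG : P.-negligible (~` G).
  rewrite setCK; apply: negligible_bigcup => i.
  by exists (Zs i @^-1` B); split => //; exact: (etrans (Zs_law i _ mB) QB).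
have ptw w : G w -> forall i, f x (Zs i w) <= expR eps * f x' (Zs i w) /\
                               f x' (Zs i w) <= expR eps * f x (Zs i w).
  move=> Gw i; have nB : ~ B (Zs i w) by move=> Bz; apply: Gw; exists i.
  by split; rewrite leNgt; apply/negP => hh; apply: nB; [left|right].
have uw y y' w : (forall i, f y (Zs i w) <= expR eps * f y' (Zs i w)) ->
    forall i, ppr_uweight alpha (f y) Zs (arrival Es) w i <=
              E * ppr_uweight alpha (f y') Zs (arrival Es) w i.
  move=> h i; rewrite /ppr_uweight mulrCA; apply: ler_wpM2l; first exact: powR_ge0.
  rewrite /E (mulrC alpha eps) expRM -powRM ?expR_ge0 //.
  apply: ge0_ler_powR; rewrite ?nnegrE ?mulr_ge0 ?expR_ge0 //.
  - by apply: ltW; apply: lt_trans alpha_gt1.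
have uge0 y w i : 0 <= ppr_uweight alpha (f y) Zs (arrival Es) w i.
  exact: mulr_ge0 (powR_ge0 _ _) (powR_ge0 _ _).
have wge0 y w k : 0 <= ppr_weight alpha (f y) Zs (arrival Es) w k.
  apply: divr_ge0 => //; apply: fine_ge0; apply: nneseries_ge0 => i _ _.
  by rewrite lee_fin.
have ind0 (p : (nat -> Z) * nat) : 0 <= (\1_S p : R).
  by rewrite indicE; case: (_ \in _).
have tge0 y w k : (0 <= (\1_S ((fun i => Zs i w), k) : R)%:E *
                         (ppr_weight alpha (f y) Zs (arrival Es) w k)%:E)%E.
  by rewrite -EFinM lee_fin mulr_ge0.
have Fge0 y w : (0 <= \sum_(k <oo) ((\1_S ((fun i => Zs i w), k) : R)%:E *
                         (ppr_weight alpha (f y) Zs (arrival Es) w k)%:E))%E.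
  by apply: nneseries_ge0 => k _ _.
have Fle w : G w ->
  (\sum_(k <oo) ((\1_S ((fun i => Zs i w), k) : R)%:E *
                         (ppr_weight alpha (f x) Zs (arrival Es) w k)%:E) <=
   c%:E * \sum_(k <oo) ((\1_S ((fun i => Zs i w), k) : R)%:E *
                         (ppr_weight alpha (f x') Zs (arrival Es) w k)%:E))%E.
  move=> Gw; rewrite -nneseriesZl; last by move=> k _.
  apply: lee_nneseries => [k _ _|k _] //.
  rewrite -!EFinM lee_fin [leRHS]mulrCA; apply: ler_wpM2l => //.
  rewrite /ppr_weight cE; apply: weight_le => // i.
  - by apply: uw => j; case: (ptw w Gw j).
  - by apply: uw => j; case: (ptw w Gw j).
have H := @final_step _ _ _ P G _ _ c mG nG c0 (Fge0 x) (Fge0 x') Fle.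
exact H.
Qed.
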